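(* Let $A,A^*$ be a Leonard pair in $\mathcal A$. Then there exists a unique antiautomorphism $\dagger$ of $\mathcal A$ such that $A^\dagger=A$ and $A^{*\dagger}=A^*$. Moreover $X^{\dagger\dagger}=X$ for all $X\in\mathcal A$.
   Context: Let $\mathbb K$ be a field, $d\ge 0$ an integer, and $\mathcal A$ a $\mathbb K$-algebra isomorphic to $\mathrm{Mat}_{d+1}(\mathbb K)$; let $V$ be an irreducible left $\mathcal A$-module. A square matrix is tridiagonal if every nonzero entry lies on the diagonal, subdiagonal or superdiagonal; a tridiagonal matrix is irreducible if all subdiagonal and superdiagonal entries are nonzero. A Leonard pair in $\mathcal A$ is an ordered pair $A,A^*\in\mathcal A$ ($A^*$ is just a name, not an adjoint) such that (i) there is a basis of $V$ w.r.t. which the matrix of $A$ is irreducible tridiagonal and the matrix of $A^*$ is diagonal, and (ii) there is a basis of $V$ w.r.t. which the matrix of $A^*$ is irreducible tridiagonal and the matrix of $A$ is diagonal. An antiautomorphism of $\mathcal A$ is a $\mathbb K$-linear bijection $\sigma:\mathcal A\to\mathcal A$ with $(XY)^\sigma=Y^\sigma X^\sigma$ for all $X,Y\in\mathcal A$. *)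

(* Defs.v *)
From HB Require Import structures.
From mathcomp Require Import all_boot all_order all_algebra.
Set Implicit Arguments. Unset Strict Implicit. Unset Printing Implicit Defensive.
Import GRing.Theory.
Local Open Scope ring_scope.

Definition tridiag {K : fieldType} {n : nat} (B : 'M[K]_n) : Prop :=
  forall i j : 'I_n, (i.+1 < j)%N \/ (j.+1 < i)%N -> B i j = 0.

Definition irr_tridiag {K : fieldType} {n : nat} (B : 'M[K]_n) : Prop :=
  tridiag B /\
  forall i j : 'I_n, (j == i.+1 :> nat) || (i == j.+1 :> nat) -> B i j != 0.

(* Matrix of the endomorphism X of V = 'cV_n with respect to the basis given by
   the columns of the invertible matrix P. *)
Definition mx_wrt {K : fieldType} {n : nat} (P X : 'M[K]_n) : 'M[K]_n :=
  invmx P *m X *m P.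

Definition leonard_pair_mx {K : fieldType} {n : nat} (A As : 'M[K]_n) : Prop :=
  (exists P : 'M[K]_n, P \in unitmx /\
      irr_tridiag (mx_wrt P A) /\ is_diag_mx (mx_wrt P As)) /\
  (exists Q : 'M[K]_n, Q \in unitmx /\
      irr_tridiag (mx_wrt Q As) /\ is_diag_mx (mx_wrt Q A)).

(* Leonard pair in an algebra calA, given an algebra isomorphism
   phi : Mat_{d+1}(K) -> calA; V is the irreducible module K^{d+1},
   on which calA acts through phi^{-1}. *)
Definition leonard_pair {K : fieldType} {d : nat} {calA : algType K}
  (phi : 'M[K]_(d.+1) -> calA) (A As : calA) : Prop :=
  exists MA MAs : 'M[K]_(d.+1),
    phi MA = A /\ phi MAs = As /\ leonard_pair_mx MA MAs.

Definition antiautomorphism {K : fieldType} {calA : algType K} (s : calA -> calA) : Prop :=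
  [/\ (forall (k : K) (X Y : calA), s (k *: X + Y) = k *: s X + s Y),
      bijective s &
      (forall X Y : calA, s (X * Y) = s Y * s X)].

(* Main.v *)
Require Import Defs.
From HB Require Import structures.
From mathcomp Require Import all_boot all_order all_algebra.
From mathcomp Require Import zify ring.
Set Implicit Arguments. Unset Strict Implicit. Unset Printing Implicit Defensive.
Import GRing.Theory.
Local Open Scope ring_scope.

Section Gen.
Variables (K : fieldType) (n : nat).
Local Notation M := ('M[K]_n.+1).

Lemma prod_diag_entry (I : Type) (s : seq I) (P : pred I) (F : I -> 'rV[K]_n.+1) x y :
  (\prod_(j <- s | P j) (diag_mx (F j) : M)) x y = (x == y)%:R * \prod_(j <- s | P j) F j 0 x.
Proof.
elim: s => [|a s IH]; first by rewrite !big_nil !mxE mulr1.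
rewrite !big_cons; case: (P a) => //.
by rewrite -mulmxE mul_diag_mx mxE IH mulrCA.
Qed.

Lemma delta_sandwich (B : M) i j :
  delta_mx i i *m B *m delta_mx j j = B i j *: delta_mx i j.
Proof.
apply/matrixP => x y; rewrite !mxE.
rewrite (bigD1 j) //= big1 => [|l /negbTE nl]; last by rewrite !mxE nl /= mulr0.
rewrite !mxE eqxx /= addr0 (bigD1 i) //= big1 => [|l /negbTE nl]; last by rewrite !mxE nl andbF mul0r.
rewrite !mxE eqxx andbT addr0.
by case: (x == i); case: (y == j); rewrite /= ?mul1r ?mul0r ?mulr0 ?mulr1.
Qed.

Variables (B : M) (th : 'rV[K]_n.+1) (S : M -> Prop).
Hypotheses (irrB : irr_tridiag B) (thd : forall i j, i != j -> th 0 i != th 0 j)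
  (SL : forall k X Y, S X -> S Y -> S (k *: X + Y))
  (SM : forall X Y, S X -> S Y -> S (X *m Y))
  (S1 : S 1%:M) (SB : S B) (Sth : S (diag_mx th)).

Lemma S0 : S 0.
Proof. by have := SL (-1) S1 S1; rewrite scaleN1r addNr. Qed.
Lemma SZ k X : S X -> S (k *: X).
Proof. by move=> SX; have := SL k SX S0; rewrite addr0. Qed.
Lemma SD X Y : S X -> S Y -> S (X + Y).
Proof. by move=> SX SY; have := SL 1 SX SY; rewrite scale1r. Qed.

Lemma Sdiag i : S (delta_mx i i).
Proof.
set E := \prod_(j | j != i) (diag_mx (\row_k ((th 0 i - th 0 j)^-1 * (th 0 k - th 0 j))) : M).
have -> : delta_mx i i = E.
  apply/matrixP => x y; rewrite prod_diag_entry mxE.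
  have [->|nx] := eqVneq x i.
    rewrite big1 ?mulr1 => [|j ji]; first by rewrite eq_sym.
    by rewrite mxE mulVf // subr_eq0 eq_sym thd.
  rewrite (bigD1 x) //= mxE subrr mulr0 mul0r mulr0.
  by [].
apply: big_ind; first exact: S1.
  by move=> X Y SX SY; rewrite -mulmxE; apply: SM.
move=> j ji.
set c := (th 0 i - th 0 j)^-1.
have -> : (diag_mx (\row_k (c * (th 0 k - th 0 j))) : M) = c *: diag_mx th + (- (c * th 0 j)) *: 1%:M.
  apply/matrixP => x y; rewrite !mxE.
  by case: (x == y); rewrite /= ?mulr1n ?mulr0n ?mulr1 ?mulr0 ?addr0; [ring|].
by apply: SL => //; apply: SZ.
Qed.

Lemma Sadj (i j : 'I_n.+1) : (j == i.+1 :> nat) || (i == j.+1 :> nat) -> S (delta_mx i j).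
Proof.
move=> adj; have nz := irrB.2 i j adj.
have := SZ (B i j)^-1 (SM (SM (Sdiag i) SB) (Sdiag j)).
by rewrite delta_sandwich scalerA mulVf // scale1r.
Qed.

Definition e (a b : nat) : M := delta_mx (inord a) (inord b).

Lemma Sup k a : (a + k <= n)%N -> S (e a (a + k)) /\ S (e (a + k) a).
Proof.
elim: k a => [|k IH] a H; first by rewrite addn0; split; apply: Sdiag.
have [H1 H2] := IH a.+1 ltac:(lia).
have sa : S (e a a.+1) /\ S (e a.+1 a).
  split; apply: Sadj; rewrite !inordK; try lia; by rewrite eqxx ?orbT.
split.
  have -> : e a (a + k.+1) = e a a.+1 *m e a.+1 (a.+1 + k) by rewrite mul_delta_mx addnS.
  exact: SM sa.1 H1.
have -> : e (a + k.+1) a = e (a.+1 + k) a.+1 *m e a.+1 a by rewrite mul_delta_mx addnS.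
exact: SM H2 sa.2.
Qed.

Lemma Sall X : S X.
Proof.
rewrite (matrix_sum_delta X).
apply: big_ind => //; [exact: S0 | exact: SD | move=> i _].
apply: big_ind => //; [exact: S0 | exact: SD | move=> j _].
apply: SZ.
have [le|lt] := leqP i j.
  have := (Sup (a := i) (k := j - i) ltac:(have := ltn_ord j; lia)).1.
  by rewrite /e subnKC // !inord_val.
have := (Sup (a := j) (k := i - j) ltac:(have := ltn_ord i; lia)).2.
by rewrite /e subnKC ?(ltnW lt) // !inord_val.
Qed.
End Gen.

Section Eig.
Variables (K : fieldType) (n : nat).
Local Notation M := ('M[K]_n.+1).

Lemma eig0 (B : M) (v : 'cV[K]_n.+1) t : irr_tridiag B -> B *m v = t *: v -> v 0 0 = 0 -> v = 0.
Proof.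
move=> [trB nzB] Bv v0.
suff H : forall m (k : 'I_n.+1), (k <= m)%N -> v k 0 = 0.
  apply/matrixP => x y; rewrite (ord1 y) mxE; apply: (H x); exact: leqnn.
elim=> [|m IH] k km.
  have -> : k = 0 by apply/val_inj => /=; lia.
  exact v0.
have [le|gt] := leqP k m; first exact: IH.
have ek : k = m.+1 :> nat by lia.
have mn : (m < n.+1)%N by have := ltn_ord k; lia.
set mo := Ordinal mn.
have := congr1 (fun X : 'cV[K]_n.+1 => X mo 0) Bv; rewrite !mxE (IH mo (leqnn _)) mulr0.
rewrite (bigD1 k) //= big1 => [|l lk].
  rewrite addr0 => /eqP; rewrite mulf_eq0 => /orP [|/eqP //].
  by rewrite (negbTE (nzB mo k _)) // ek eqxx.
have [ll|gl] := leqP l m; first by rewrite IH // mulr0.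
move: lk; rewrite -val_eqE /= => lk.
rewrite trB ?mul0r //; left; simpl; lia.
Qed.

Lemma distinct_eig (Bs N : M) th : irr_tridiag Bs -> N \in unitmx ->
  Bs *m N = N *m diag_mx th -> forall i j, i != j -> th 0 i != th 0 j.
Proof.
move=> irr Nu BN i j ij; apply/negP => /eqP tij.
have key : forall y : 'cV_n.+1, diag_mx th *m y = th 0 i *: y -> (N *m y) 0 0 = 0 -> y = 0.
  move=> y dy Ny0.
  have: N *m y = 0.
    apply: (eig0 (t := th 0 i) irr) => //.
    by rewrite mulmxA BN -mulmxA dy scalemxAr.
  by move=> /(congr1 (mulmx (invmx N))); rewrite mulKmx // mulmx0.
have dei : forall c1 c2, diag_mx th *m (c1 *: delta_mx i 0 + c2 *: delta_mx j 0)
   = th 0 i *: (c1 *: delta_mx i 0 + c2 *: delta_mx j 0 : 'cV_n.+1).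
  move=> c1 c2; apply/matrixP => x z; rewrite mul_diag_mx !mxE.
  have [->|xi] := eqVneq x i; first by [].
  have [->|xj] := eqVneq x j; first by rewrite tij.
  by rewrite /= !mulr0n !mulr0 !addr0 !mulr0.
set U := N *m (delta_mx i 0 : 'cV_n.+1); set V := N *m (delta_mx j 0 : 'cV_n.+1).
set a := U 0 0; set b := V 0 0.
have y0 := key (b *: delta_mx i 0 + (-a) *: delta_mx j 0) (dei _ _).
have: b *: delta_mx i 0 + (-a) *: delta_mx j 0 = 0 :> 'cV_n.+1.
  have E : forall (X Y : 'cV[K]_n.+1) c d, (c *: X + d *: Y) 0 0 = c * X 0 0 + d * Y 0 0.
    by move=> *; rewrite !mxE.
  apply: y0; rewrite mulmxDr -!scalemxAr E -/U -/V -/a -/b; ring.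
move=> yz.
have ai : b = 0.
  have := congr1 (fun X : 'cV[K]_n.+1 => X i 0) yz; rewrite !mxE eqxx (negbTE ij) /=.
  by rewrite mulr1 mulr0 addr0.
have aj : a = 0.
  have := congr1 (fun X : 'cV[K]_n.+1 => X j 0) yz; rewrite !mxE eq_sym (negbTE ij) !eqxx /=.
  by rewrite mulr1 mulr0 add0r => /eqP; rewrite oppr_eq0 => /eqP.
have := key (delta_mx i 0).
have -> : diag_mx th *m (delta_mx i 0 : 'cV_n.+1) = th 0 i *: delta_mx i 0.
  by have := dei 1 0; rewrite !scale1r !scale0r !addr0.
move=> /(_ erefl aj) /(congr1 (fun X : 'cV[K]_n.+1 => X i 0)); rewrite !mxE !eqxx /=.
by move/eqP; rewrite oner_eq0.
Qed.
End Eig.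

Section Dsec.
Variables (K : fieldType) (n : nat).
Local Notation M := ('M[K]_n.+1).
Variable (B : M).
Hypothesis irrB : irr_tridiag B.

Definition rr (m : nat) : K := B (inord m.+1) (inord m) / B (inord m) (inord m.+1).
Definition dd (k : nat) : K := \prod_(m < k) rr m.

Lemma dd_neq0 (k : 'I_n.+1) : dd k != 0.
Proof.
apply/prodf_neq0 => m _; have := ltn_ord k => kn.
have mk := ltn_ord m.
rewrite /rr mulf_neq0 ?invr_eq0 //; apply: irrB.2; rewrite !inordK; try lia;
  by rewrite eqxx ?orbT.
Qed.

Lemma ddS m : dd m.+1 = dd m * rr m.
Proof. by rewrite /dd big_ord_recr. Qed.

Definition Dv : M := diag_mx (\row_k dd k).
Definition Di : M := diag_mx (\row_k (dd k)^-1).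

Lemma DDi : Dv *m Di = 1%:M.
Proof.
apply/matrixP => x y; rewrite mul_diag_mx !mxE.
by case: (x == y); rewrite ?mulr1n ?mulr0n ?mulr0 // mulfV // dd_neq0.
Qed.

Lemma DiD : Di *m Dv = 1%:M.
Proof.
apply/matrixP => x y; rewrite mul_diag_mx !mxE.
by case: (x == y); rewrite ?mulr1n ?mulr0n ?mulr0 // mulVf // dd_neq0.
Qed.

Lemma DBt : Dv *m B^T = B *m Dv.
Proof.
have [trB nzB] := irrB.
apply/matrixP => x y; rewrite mul_diag_mx mul_mx_diag !mxE.
have [e|ne] := eqVneq (y : nat) x.+1.
  have nz : B x y != 0 by apply: nzB; rewrite e eqxx.
  have -> : (y : nat) = x.+1 by [].
  rewrite ddS /rr.
  have -> : (inord x.+1 : 'I_n.+1) = y by apply/val_inj; rewrite /= inordK -e.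
  rewrite inord_val; field; exact: nz.
have [e'|ne'] := eqVneq (x : nat) y.+1.
  have nz : B y x != 0 by apply: nzB; rewrite e' eqxx.
  rewrite e' ddS /rr.
  have -> : (inord y.+1 : 'I_n.+1) = x by apply/val_inj; rewrite /= inordK -e'.
  rewrite inord_val; field; exact: nz.
have [xy|nxy] := eqVneq x y; first by rewrite xy mulrC.
rewrite !trB ?mulr0 ?mul0r //.
  move: nxy; rewrite -val_eqE /=; lia.
move: nxy; rewrite -val_eqE /=; lia.
Qed.
End Dsec.

Lemma anti1 (K : fieldType) (calA : algType K) (f : calA -> calA) :
  antiautomorphism f -> f 1 = 1.
Proof.
move=> [_ [g _ gK] fM].
have := fM (g 1) 1; rewrite mulr1 gK => h.
by rewrite -[LHS]mulr1 -h.
Qed.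

Theorem theorem5p8 (K : fieldType) (d : nat) (calA : algType K)
  (phi : {lrmorphism 'M[K]_(d.+1) -> calA}) (phi_bij : bijective phi)
  (A As : calA) :
  leonard_pair phi A As ->
  exists dag : calA -> calA,
    [/\ antiautomorphism dag, dag A = A, dag As = As,
        (forall X : calA, dag (dag X) = X) &
        (forall tau : calA -> calA,
            antiautomorphism tau -> tau A = A -> tau As = As -> tau =1 dag)].
Proof.
move=> [MA [MAs [eA [eAs [[P [Pu [irrA dAs]]] [Q [Qu [irrAs dA]]]]]]]].
have [psi phiK psiK] := phi_bij.
set A' := mx_wrt P MA; set As' := mx_wrt P MAs.
set th := \row_k As' k k.
have As'E : As' = diag_mx th.
  move/is_diag_mxP: dAs => h.
  apply/matrixP => x y; rewrite [in RHS]mxE.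
  have [->|nxy] := eqVneq x y; first by rewrite mulr1n [th _ _]mxE.
  by rewrite mulr0n h.
have thd : forall i j, i != j -> th 0 i != th 0 j.
  apply: (distinct_eig irrAs (N := invmx Q *m P)); first by rewrite unitmx_mul unitmx_inv Qu.
  by rewrite -As'E /As' /mx_wrt !mulmxA mulmxK // mulmxK.
pose c (X : 'M[K]_d.+1) := invmx P *m X *m P.
pose ci (X : 'M[K]_d.+1) := P *m X *m invmx P.
have ciK : forall X, ci (c X) = X.
  by move=> X; rewrite /c /ci !mulmxA mulmxK // mulmxV // mul1mx.
have cK : forall X, c (ci X) = X.
  by move=> X; rewrite /c /ci !mulmxA mulmxKV // mulVmx // mul1mx.
have cM : forall X Y, c (X *m Y) = c X *m c Y.
  by move=> X Y; rewrite /c !mulmxA mulmxK.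
have ciM : forall X Y, ci (X *m Y) = ci X *m ci Y.
  by move=> X Y; rewrite /ci !mulmxA mulmxKV.
have cL : forall k X Y, c (k *: X + Y) = k *: c X + c Y.
  by move=> k X Y; rewrite /c mulmxDr mulmxDl -!scalemxAr -scalemxAl.
have ciL : forall k X Y, ci (k *: X + Y) = k *: ci X + ci Y.
  by move=> k X Y; rewrite /ci mulmxDr mulmxDl -!scalemxAr -scalemxAl.
pose t (X : 'M[K]_d.+1) := Dv A' *m X^T *m Di A'.
have tM : forall X Y, t (X *m Y) = t Y *m t X.
  move=> X Y; rewrite /t trmx_mul !mulmxA -[Dv A' *m Y^T *m Di A' *m Dv A']mulmxA DiD //.
  by rewrite mulmx1.
have tL : forall k X Y, t (k *: X + Y) = k *: t X + t Y.
  by move=> k X Y; rewrite /t linearD linearZ /= mulmxDr mulmxDl -!scalemxAr -scalemxAl.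
have trD : (Dv A')^T = Dv A' by rewrite tr_diag_mx.
have trDi : (Di A')^T = Di A' by rewrite tr_diag_mx.
have tt : forall X, t (t X) = X.
  move=> X; rewrite /t !trmx_mul trmxK trD trDi !mulmxA DDi // mul1mx -mulmxA DDi //.
  by rewrite mulmx1.
have tA : t A' = A'.
  by rewrite /t DBt // -mulmxA DDi // mulmx1.
have tD : t As' = As'.
  rewrite As'E /t tr_diag_mx.
  have -> : Dv A' *m diag_mx th = diag_mx th *m Dv A'.
    apply/matrixP => x y; rewrite mul_diag_mx mul_mx_diag !mxE.
    by have [->|nxy] := eqVneq x y; rewrite ?mulr0n ?mulr0 ?mul0r // ?mulr1n mulrC.
  by rewrite -mulmxA DDi // mulmx1.
pose s X := ci (t (c X)).
have sM : forall X Y, s (X *m Y) = s Y *m s X by move=> X Y; rewrite /s cM tM ciM.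
have sL : forall k X Y, s (k *: X + Y) = k *: s X + s Y by move=> k X Y; rewrite /s cL tL ciL.
have ss : forall X, s (s X) = X by move=> X; rewrite /s cK tt ciK.
have ciA : ci A' = MA by rewrite -[A']/(c MA) ciK.
have ciAs : ci As' = MAs by rewrite -[As']/(c MAs) ciK.
have sA : s MA = MA by rewrite /s -[c MA]/A' tA ciA.
have sAs : s MAs = MAs by rewrite /s -[c MAs]/As' tD ciAs.
have psiL : forall k X Y, psi (k *: X + Y) = k *: psi X + psi Y.
  move=> k X Y; apply: (can_inj phiK); rewrite linearP /= psiK.
  by rewrite -{1}(psiK X) -{1}(psiK Y).
have psiM : forall X Y, psi (X * Y) = psi X *m psi Y.
  move=> X Y; apply: (can_inj phiK); rewrite mulmxE rmorphM psiK.
  by rewrite -{1}(psiK X) -{1}(psiK Y).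
pose dag X := phi (s (psi X)).
have dagdag : forall X, dag (dag X) = X by move=> X; rewrite /dag phiK ss psiK.
have dagA : antiautomorphism dag.
  split.
  - by move=> k X Y; rewrite /dag psiL sL linearP.
  - by exists dag => X; rewrite dagdag.
  - by move=> X Y; rewrite /dag psiM sM mulmxE rmorphM.
exists dag; split => //.
- by rewrite /dag -eA phiK sA.
- by rewrite /dag -eAs phiK sAs.
move=> tau tauA tA1 tAs1.
have [tauL _ tauM] := tauA.
have [dagL _ dagM] := dagA.
pose S X := tau (phi (ci X)) = dag (phi (ci X)).
have key : forall X, S X.
  apply: (Sall irrA thd).
  - move=> k X Y; rewrite /S ciL linearP /= tauL dagL => -> -> //.
  - move=> X Y; rewrite /S ciM -[ci X *m ci Y]/(ci X * ci Y) (rmorphM phi (ci X) (ci Y)) tauM dagM => -> -> //.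
  - rewrite /S /ci mulmx1 mulmxV // -[1%:M]/(1 : 'M[K]_d.+1) rmorph1.
    by rewrite (anti1 tauA) (anti1 dagA).
  - by rewrite /S ciA eA tA1 /dag -eA phiK sA.
  - by rewrite /S -As'E ciAs eAs tAs1 /dag -eAs phiK sAs.
move=> X; have := key (c (psi X)); by rewrite /S ciK psiK.
Qed.
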